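(* Let $I=\langle K,f,f',s,t,P\rangle$ be an instance of \textsc{Sub-STS} where $K=(V,E)$ is a complete graph, $P\subseteq V$, $f(s)=f'(t)=0$, $f(v)\neq 0$ for all $v\neq s$, and $f'(v)\neq 0$ for all $v\neq t$, and where $f$ and $f'$ color the same number of vertices with each color. Let $R=\{v\in V\mid f(v)\neq f'(v)\}\cup\{s,t\}\cup P$, and let $D$ be the directed multigraph (self-loops and parallel edges allowed) with vertex set $\{f(v)\mid v\in R\}$ and edge multiset $\{(f(v),f'(v))\mid v\in R\}$ (one edge per $v\in R$). Let $\mathrm{cc}(D)$ be the number of connected components of $D$. Then $\lambda(I)\ge |R|+\mathrm{cc}(D)-2$.
   Context: Colorings are arbitrary maps from $V$ to a set of colors. A swapping sequence of length $p-1$ from $f$ to $f'$ is a sequence $\langle f_1,\dots,f_p\rangle$ of colorings with $f_1=f$, $f_p=f'$, together with a walk $\langle w_1,\dots,w_p\rangle$ such that for $2\le i\le p$, $f_i$ is obtained from $f_{i-1}$ by swapping the colors of $w_{i-1}$ and $w_i$ (other vertices unchanged). For an instance $I=\langle G,f,f',s,t,P\rangle$ of \textsc{Sub-STS}, $\lambda(I)$ is the minimum length of a swapping sequence from $f$ to $f'$ whose walk $\langle w_1,\dots,w_m\rangle$ satisfies $w_1=s$, $w_m=t$ and $P\subseteq\{w_1,\dots,w_m\}$, and $\infty$ if none exists. *)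

(* Defs.v *)
From mathcomp Require Import all_boot.
Set Implicit Arguments. Unset Strict Implicit. Unset Printing Implicit Defensive.

Section Defs.
Variables (V C : finType).

Definition complete_adj : rel V := fun u w => u != w.

Definition swap_col (g : V -> C) (u w : V) : V -> C :=
  fun x => if x == u then g w else if x == w then g u else g x.

(* <fs, ws> is a swapping sequence in the graph with adjacency adj from f to f':
   fs = <f_1..f_p>, ws = <w_1..w_p> a walk, f_1 = f, f_p = f',
   f_i obtained from f_{i-1} by swapping the colors of w_{i-1} and w_i. *)
Definition swapping_seq (adj : rel V) (f f' : V -> C)
    (fs : seq (V -> C)) (ws : seq V) : Prop :=
  match ws with
  | [::] => False
  | w0 :: _ =>
    [/\ size fs = size ws, nth f fs 0 = f, last f fs = f' &
      forall i, (0 < i < size ws)%N ->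
        adj (nth w0 ws i.-1) (nth w0 ws i)
        /\ nth f fs i = swap_col (nth f fs i.-1) (nth w0 ws i.-1) (nth w0 ws i)]
  end.

(* feasible solutions of a Sub-STS instance <G,f,f',s,t,P>: swapping sequences
   whose walk starts at s, ends at t and visits every vertex of P.
   The length of such a sequence is (size ws).-1; lambda(I) is the minimum
   length over feasible solutions (infinity if none). *)
Definition substs_feasible (adj : rel V) (f f' : V -> C) (s t : V) (P : {set V})
    (fs : seq (V -> C)) (ws : seq V) : Prop :=
  [/\ swapping_seq adj f f' fs ws, head s ws = s, last s ws = t &
      {subset P <= ws}].

Definition Rset (f f' : V -> C) (s t : V) (P : {set V}) : {set V} :=
  [set v | f v != f' v] :|: [set s; t] :|: P.

(* the directed multigraph D on colors: vertex set f(R), one edge (f v, f' v)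
   per v in R.  Connected components are those of the underlying undirected
   multigraph (weak connectivity). *)
Definition D_vertices (f f' : V -> C) (R : {set V}) : {set C} := f @: R.
Definition D_adj (f f' : V -> C) (R : {set V}) : rel C :=
  fun c d => [exists v in R, ((f v == c) && (f' v == d)) || ((f v == d) && (f' v == c))].
Definition D_cc (f f' : V -> C) (R : {set V}) : nat :=
  #| [set [set d in D_vertices f f' R | connect (D_adj f f' R) c d]
        | c in D_vertices f f' R] |.
End Defs.

(* Main.v *)
Require Import Defs.
From mathcomp Require Import all_boot.
Set Implicit Arguments. Unset Strict Implicit. Unset Printing Implicit Defensive.
Lemma card_factor (T U W : finType) (S : {set T}) (F : T -> U) (G : T -> W) :
  {in S &, forall x y, F x = F y -> G x = G y} -> #|G @: S| <= #|F @: S|.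
Proof.
move=> H.
have [->|[x0 Hx0]] := set_0Vmem S; first by rewrite !imset0 !cards0.
pose rep u := odflt x0 [pick x in S | F x == u].
apply: (leq_trans _ (leq_imset_card (fun u => G (rep u)) _)).
apply: subset_leq_card; apply/subsetP => y /imsetP [x xS ->].
apply/imsetP; exists (F x); first by apply/imsetP; exists x.
rewrite /rep; case: pickP => [z /andP [zS /eqP Fz]|/(_ x)]; last by rewrite xS eqxx.
by apply: H.
Qed.

Section Graph.
Variable C : finType.
Definition cls (r : rel C) c := [set d | connect r c d].
Definition ncc (r : rel C) (S : {set C}) := #|cls r @: S|.

Lemma clsE (r : rel C) x y : symmetric r -> (cls r x == cls r y) = connect r x y.
Proof.
move=> sr; apply/eqP/idP => [E|cxy].
  have : y \in cls r y by rewrite inE connect0.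
  by rewrite -E inE.
apply/setP => z; rewrite !inE; apply/idP/idP => H.
  by apply: connect_trans H; rewrite (sym_connect_sym sr).
exact: connect_trans cxy H.
Qed.

Lemma G1 (r1 r2 : rel C) (S1 S2 : {set C}) :
  symmetric r1 -> symmetric r2 ->
  (forall u v, r1 u v -> connect r2 u v) ->
  (forall c, c \in S2 -> exists2 c', c' \in S1 & connect r2 c c') ->
  ncc r2 S2 <= ncc r1 S1.
Proof.
move=> s1 s2 H12 cov.
apply: (@leq_trans #|cls r2 @: S1|).
  apply: subset_leq_card; apply/subsetP => X /imsetP [c cS ->].
  have [c' c'S cc'] := cov c cS; apply/imsetP; exists c' => //.
  by apply/eqP; rewrite clsE.
apply: card_factor => x y _ _ /eqP; rewrite clsE // => cxy.
by apply/eqP; rewrite clsE //; apply: (connect_sub H12).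
Qed.

Definition addE (r : rel C) (a b : C) : rel C :=
  fun u v => [|| r u v, (u == a) && (v == b) | (u == b) && (v == a)].

Lemma addE_inv (r : rel C) a b x y : symmetric r ->
  connect (addE r a b) x y ->
  connect r x y \/ ((connect r x a || connect r x b) && (connect r a y || connect r b y)).
Proof.
move=> sr /connectP [p pth ->].
have cs := sym_connect_sym sr.
pose Inv z := connect r x z \/ ((connect r x a || connect r x b) && (connect r a z || connect r b z)).
have step z w : Inv z -> addE r a b z w -> Inv w.
  have cr u v : r u v -> connect r u v by move=> h; apply: connect1.
  case=> [cz|/andP [h1 h2]] /or3P [e|/andP [/eqP Ez /eqP Ey]|/andP [/eqP Ez /eqP Ey]].
  - by left; apply: connect_trans cz (cr _ _ e).
  - by right; subst; rewrite cz connect0 orbT.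
  - by right; subst; rewrite cz connect0 orbT.
  - right; rewrite h1 /=; case/orP: h2 => h2.
      by rewrite (connect_trans h2 (cr _ _ e)).
    by rewrite (connect_trans h2 (cr _ _ e)) orbT.
  - by right; subst; rewrite h1 connect0 orbT.
  - by right; subst; rewrite h1 connect0.
suff: forall z, path (addE r a b) z p -> Inv z -> Inv (last z p).
  by apply => //; left; apply: connect0.
elim: p {pth} => [|w p IH] z //= /andP [e pth] Iz.
by apply: IH => //; apply: step e.
Qed.


Lemma G2 (r1 r2 : rel C) (S1 S2 : {set C}) a b :
  symmetric r1 -> symmetric r2 ->
  (forall u v, r1 u v -> connect r2 u v) ->
  (forall u v, r2 u v -> connect (addE r1 a b) u v) ->
  S1 \subset S2 ->
  ncc r1 S1 <= (ncc r2 S2).+1.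
Proof.
move=> s1 s2 H12 H21 sS.
have cs1 := sym_connect_sym s1.
pose S1' := [set c in S1 | ~~ connect r1 c a].
apply: (@leq_trans #|cls r1 a |: cls r1 @: S1'|).
  apply: subset_leq_card; apply/subsetP => X /imsetP [c cS ->].
  rewrite !inE; case: (boolP (connect r1 c a)) => ca.
    by apply/orP; left; rewrite clsE.
  by apply/orP; right; apply/imsetP; exists c => //; rewrite inE cS.
rewrite cardsU1 -add1n; apply: leq_add; first by case: (_ \notin _).
apply: (@leq_trans #|cls r2 @: S1'|).
  apply: card_factor => x y; rewrite !inE => /andP [_ xa] /andP [_ ya] /eqP.
  rewrite clsE // => /(connect_sub H21) /addE_inv - /(_ s1) [cxy|/andP [h1 h2]].
    by apply/eqP; rewrite clsE.
  rewrite (negbTE xa) /= in h1; rewrite cs1 (negbTE ya) /= in h2.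
  by apply/eqP; rewrite clsE //; apply: connect_trans h1 h2.
apply: subset_leq_card; apply: imsetS; apply/subsetP => x; rewrite inE => /andP [xS _].
exact: (subsetP sS).
Qed.

End Graph.

Lemma addE_sym (C : finType) (r : rel C) a b : symmetric r -> symmetric (addE r a b).
Proof.
move=> sr u v; rewrite /addE sr; congr (_ || _); rewrite orbC; congr (_ || _); by rewrite andbC.
Qed.

Lemma ncc_restr (C : finType) (r : rel C) (S : {set C}) : symmetric r ->
  #|[set [set d in S | connect r c d] | c in S]| = ncc r S.
Proof.
move=> sr; have cs := sym_connect_sym sr.
apply/eqP; rewrite eqn_leq; apply/andP; split; apply: card_factor => x y xS yS.
- move/eqP; rewrite clsE // => cxy; apply/setP => z; rewrite !inE.
  case: (z \in S) => //=; apply/idP/idP => h; last exact: connect_trans cxy h.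
  by apply: connect_trans h; rewrite cs.
- move=> E; apply/eqP; rewrite clsE //.
  have : y \in [set d in S | connect r y d] by rewrite inE yS connect0.
  by rewrite -E inE cs => /andP [].
Qed.

Section Main.
Variables (V C : finType) (f' : V -> C) (t : V).

Lemma Dsym (g : V -> C) (R : {set V}) : symmetric (D_adj g f' R).
Proof.
move=> u v; apply/existsP/existsP => [] [x /andP [xR h]]; exists x; rewrite xR /=;
  by rewrite orbC.
Qed.

Lemma Dedge (g : V -> C) (R : {set V}) v : v \in R -> D_adj g f' R (g v) (f' v).
Proof. by move=> vR; apply/existsP; exists v; rewrite vR !eqxx. Qed.

Lemma Dsub (g : V -> C) (R : {set V}) (r : rel C) : symmetric r ->
  (forall v, v \in R -> connect r (g v) (f' v)) ->
  forall u v, D_adj g f' R u v -> connect r u v.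
Proof.
move=> sr H u v /existsP [x /andP [xR /orP [] /andP [/eqP <- /eqP <-]]]; first exact: H.
by rewrite (sym_connect_sym sr); apply: H.
Qed.

Lemma Dcover (g g' : V -> C) (R R' : {set V}) (r : rel C) :
  (forall v, v \in R -> exists2 u, u \in R' & connect r (g v) (g' u)) ->
  forall c, c \in g @: R -> exists2 c', c' \in g' @: R' & connect r c c'.
Proof.
move=> H c /imsetP [v vR ->]; have [u uR cu] := H v vR.
by exists (g' u) => //; apply/imsetP; exists u.
Qed.

Lemma Dcc (g : V -> C) (R : {set V}) : D_cc g f' R = ncc (D_adj g f' R) (g @: R).
Proof. by rewrite /D_cc /D_vertices ncc_restr //; apply: Dsym. Qed.

Definition Phi g b Q := #|Rset g f' b t Q| + D_cc g f' (Rset g f' b t Q).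

Lemma step g b w Q : w != b -> Phi g b Q <= (Phi (swap_col g b w) w (Q :\ w)).+1.
Proof.
move=> wb; rewrite /Phi !Dcc.
set R := Rset g f' b t Q; set g' := swap_col g b w; set R' := Rset g' f' w t (Q :\ w).
have bw : b != w by rewrite eq_sym.
have bR : b \in R by rewrite !inE eqxx orbT.
have wR' : w \in R' by rewrite !inE eqxx orbT.
have gb' : g' b = g w by rewrite /g' /swap_col eqxx.
have gw' : g' w = g b by rewrite /g' /swap_col (negbTE wb) eqxx.
have gv' v : v != b -> v != w -> g' v = g v.
  by move=> vb vw; rewrite /g' /swap_col (negbTE vb) (negbTE vw).
have memR v : v != b -> v != w -> (v \in R') = (v \in R).
  by move=> vb vw; rewrite !inE gv' // (negbTE vb) (negbTE vw).
have bR'E : (b \in R') = (g w != f' b) || (b == t) || (b \in Q).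
  by rewrite !inE gb' (negbTE bw).
have wRE : (w \in R) = (g w != f' w) || (w == t) || (w \in Q).
  by rewrite !inE (negbTE wb).
have cardR : #|R| = 1 + (w \in R) + #|R :\ b :\ w|.
  by rewrite (cardsD1 b R) bR (cardsD1 w (R :\ b)) in_setD1 wb addnA.
have cardR' : #|R'| = (b \in R') + 1 + #|R' :\ b :\ w|.
  by rewrite (cardsD1 b R') (cardsD1 w (R' :\ b)) in_setD1 wb wR' addnA.
have eqD : R :\ b :\ w = R' :\ b :\ w.
  apply/setP => v; rewrite !in_setD1; case: (boolP (v == w)) => //= vw.
  by case: (boolP (v == b)) => //= vb; rewrite memR.
have sr := @Dsym g R; have sr' := @Dsym g' R'.
have e v : v \in R -> D_adj g f' R (g v) (f' v) := @Dedge g R v.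
have e' v : v \in R' -> D_adj g' f' R' (g' v) (f' v) := @Dedge g' R' v.
have cs := sym_connect_sym sr.
have c1 u v : D_adj g f' R u v -> connect (D_adj g f' R) u v by move=> h; apply: connect1.
case: (boolP (b \in R')) => bR'.
-
  pose ra := addE (D_adj g f' R) (g b) (g w).
  have sra : symmetric ra by apply: addE_sym.
  have ra1 u v : D_adj g f' R u v -> connect ra u v.
    by move=> h; apply: connect1; rewrite /ra /addE h.
  have ab : connect ra (g b) (g w) by apply: connect1; rewrite /ra /addE !eqxx orbT.
  have ba : connect ra (g w) (g b) by rewrite (sym_connect_sym sra).
  have h1 : ncc (D_adj g f' R) (g @: R) <= (ncc ra (g @: R)).+1.
    apply: (G2 (a:=g b) (b:=g w)) => //.
    by move=> u v h; apply: connect1.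
  have h2 : ncc ra (g @: R) <= ncc (D_adj g' f' R') (g' @: R').
    apply: G1 => //.
      apply: Dsub => // v vR'.
      case: (eqVneq v b) => [->|vb].
        by rewrite gb'; apply: connect_trans ba (ra1 _ _ (e _ bR)).
      case: (eqVneq v w) => [->|vw].
        rewrite gw'; apply: connect_trans ab _.
        case: (boolP (w \in R)) => wR; first exact: ra1 (e _ wR).
        move: wR; rewrite wRE => /norP [/norP [/negbNE /eqP -> _] _].
        exact: connect0.
      by rewrite gv' //; apply: ra1; apply: e; rewrite -memR.
    apply: Dcover => v vR.
    case: (eqVneq v b) => [->|vb]; first by exists w => //; rewrite gw' connect0.
    case: (eqVneq v w) => [->|vw]; first by exists b => //; rewrite gb' connect0.
    by exists v; [rewrite memR | rewrite gv' // connect0].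
  have hc : #|R| <= #|R'|.
    rewrite cardR cardR' eqD bR'; case: (w \in R) => //.
  rewrite -addnS; apply: leq_add => //; exact: leq_trans h1 _.
-
  have gwb : g w = f' b by move: bR'; rewrite bR'E => /norP [/norP [/negbNE /eqP -> _] _].
  have h : ncc (D_adj g f' R) (g @: R) <= ncc (D_adj g' f' R') (g' @: R').
    apply: G1 => //.
      apply: Dsub => // v vR'.
      case: (eqVneq v b) => [vb|vb]; first by rewrite vb (negbTE bR') in vR'.
      case: (eqVneq v w) => [->|vw].
        rewrite gw'; apply: connect_trans (c1 _ _ (e _ bR)) _; rewrite -gwb.
        case: (boolP (w \in R)) => wR; first exact: c1 (e _ wR).
        move: wR; rewrite wRE => /norP [/norP [/negbNE /eqP -> _] _].
        exact: connect0.
      by rewrite gv' //; apply: c1; apply: e; rewrite -memR.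
    apply: Dcover => v vR.
    case: (eqVneq v b) => [->|vb]; first by exists w => //; rewrite gw' connect0.
    case: (eqVneq v w) => [->|vw].
      by exists w => //; rewrite gw' gwb cs; apply: c1; apply: e.
    by exists v; [rewrite memR | rewrite gv' // connect0].
  have hc : #|R| <= (#|R'|).+1.
    rewrite cardR cardR' eqD (negbTE bR'); case: (w \in R) => //=.
  rewrite -addSn; exact: leq_add.
Qed.
End Main.
Theorem lemma5 (V C : finType) (c0 : C) (f f' : V -> C) (s t : V) (P : {set V}) :
  f s = c0 -> f' t = c0 ->
  (forall v, v != s -> f v != c0) ->
  (forall v, v != t -> f' v != c0) ->
  (forall c : C, #|[set v | f v == c]| = #|[set v | f' v == c]|) ->
  forall (fs : seq (V -> C)) (ws : seq V),
    substs_feasible (@complete_adj V) f f' s t P fs ws ->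
    (#|Rset f f' s t P| + D_cc f f' (Rset f f' s t P) - 2 <= (size ws).-1)%N.
Proof.
move=> _ _ _ _ _ fs [|w0 ws'] [] //= [sz f0 fl H] hs hl Psub.
subst w0.
set W := s :: ws'.
pose Qi i := [set v in P | v \notin take i.+1 W].
have main i : i < size W ->
  Phi f' t f s (Qi 0) <= Phi f' t (nth f fs i) (nth s W i) (Qi i) + i.
  elim: i => [|i IH] lti; first by rewrite addn0 f0.
  have [adj eq] := H i.+1 lti.
  rewrite /= in adj eq.
  apply: (leq_trans (IH (ltnW lti))); rewrite eq addnS -addSn leq_add2r.
  have -> : Qi i.+1 = Qi i :\ nth s W i.+1.
    apply/setP => v; rewrite /Qi (take_nth s lti) in_setD1 !in_set mem_rcons in_cons.
    by case: (v \in P); case: (v == _); case: (v \in _).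
  by rewrite /W /=; apply: step; rewrite eq_sym.
have := main (size W).-1 (leqnn _); rewrite /Phi.
have -> : Rset f f' s t (Qi 0) = Rset f f' s t P.
  apply/setP => v; rewrite /Qi (_ : take 1 W = [:: s]); last by rewrite /W /= take0.
  rewrite !inE; case: (eqVneq v s) => _; by case: (f v != f' v); case: (v == t); case: (v \in P).
have -> : nth f fs (size W).-1 = f' by rewrite (_ : (size W).-1 = (size fs).-1) ?nth_last // sz.
have -> : nth s W (size W).-1 = t by rewrite nth_last.
have -> : Qi (size W).-1 = set0.
  apply/setP => v; rewrite /Qi (_ : ((size W).-1).+1 = size W) // take_size !inE.
  by case: (boolP (v \in P)) => //= /Psub; rewrite in_cons => ->.
have -> : Rset f' f' t t set0 = [set t].
  by apply/setP => v; rewrite !inE eqxx /= orbb orbF.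
rewrite /D_cc /D_vertices imset_set1 imset_set1 cards1 /=.
rewrite -/(Rset f f' s t P).
rewrite cards1 => h; rewrite leq_subLR; exact: h.
Qed.
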